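(* Suppose $\sigma$ is an automorphism of $D$ and let $f(t)=t^4+a_3t^3+a_2t^2+a_1t+a_0\in D[t;\sigma]$. Then $f$ is irreducible if and only if the following three conditions hold: (1) for all $b\in D$: $\sigma^3(b)\sigma^2(b)\sigma(b)b+a_3\sigma^2(b)\sigma(b)b+a_2\sigma(b)b+a_1b+a_0\neq0$; (2) for all $b\in D$: $\sigma^3(b)\sigma^2(b)\sigma(b)b+\sigma^3(b)\sigma^2(b)\sigma(b)a_3+\sigma^3(b)\sigma^2(b)\sigma(a_2)+\sigma^3(b)\sigma^2(a_1)+\sigma^3(a_0)\neq0$; (3) for all $c,d\in D$: $\sigma^2(c)\sigma(c)c+\sigma^2(d)c+\sigma^2(c)\sigma(d)+a_3(\sigma(d)+\sigma(c)c)+a_2c+a_1\neq0$ or $\sigma^2(d)d+\sigma^2(c)\sigma(c)d+a_3\sigma(c)d+a_2d+a_0\neq0$.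
   Context: $D$ is an associative division ring, $\sigma$ a ring automorphism of $D$, and $D[t;\sigma]$ the skew polynomial ring with $ta=\sigma(a)t$. A polynomial $f$ is irreducible if it is not a unit and has no factorization $f=gh$ with $\deg g,\deg h<\deg f$. *)

(* Defs.v *)
From HB Require Import structures.
From mathcomp Require Import all_boot all_order all_algebra.
Set Implicit Arguments. Unset Strict Implicit. Unset Printing Implicit Defensive.
Import GRing.Theory.
Local Open Scope ring_scope.

Definition division_ring (D : unitRingType) : Prop :=
  forall x : D, x != 0 -> x \is a GRing.unit.

(* Elements of D[t;sigma] are represented by their coefficient polynomials
   p = \sum_i p_i t^i (coefficients on the left); addition is that of {poly D},
   multiplication is the skew one:
   (\sum_i a_i t^i)(\sum_j b_j t^j) = \sum_{i,j} a_i sigma^i(b_j) t^(i+j). *)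
Definition skew_mul (D : nzRingType) (sigma : D -> D) (p q : {poly D}) : {poly D} :=
  \poly_(k < (size p + size q).-1)
     \sum_(i < k.+1) p`_i * iter i sigma q`_(k - i).

Definition skew_unit (D : nzRingType) (sigma : D -> D) (f : {poly D}) : Prop :=
  exists g : {poly D}, skew_mul sigma f g = 1 /\ skew_mul sigma g f = 1.

Definition skew_irreducible (D : nzRingType) (sigma : D -> D) (f : {poly D}) : Prop :=
  ~ skew_unit sigma f /\
  ~ (exists g h : {poly D},
        f = skew_mul sigma g h /\ (size g < size f)%N /\ (size h < size f)%N).

(* Main.v *)
Require Import Defs.
From HB Require Import structures.
From mathcomp Require Import all_boot all_order all_algebra.
From mathcomp Require Import zify.
Import GRing.Theory.
Local Open Scope ring_scope.

Lemma natlem a b c k : ((a + b).-1 <= k)%N -> (c < a)%N -> (b <= k - c)%N.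
Proof. lia. Qed.
Lemma natl2 i m n : (i < m.-1)%N -> (0 < m)%N -> (0 < n)%N -> (n <= m.-1 + n.-1 - i)%N.
Proof. lia. Qed.
Lemma natl3 (i m : nat) : i <> m.-1 -> (m.-1 <= i)%N -> (0 < m)%N -> (m <= i)%N.
Proof. lia. Qed.
Lemma natl4 m n k : (0 < m)%N -> (0 < n)%N -> (m.-1 + n.-1 < k)%N -> ((m + n).-1 <= k)%N.
Proof. lia. Qed.

Lemma natl5 a b : ((a + b).-1 = 5 -> a < 5 -> b < 5 -> a = 2 \/ a = 3 \/ a = 4)%N.
Proof. lia. Qed.
Lemma natl6 a b k : ((a + b).-1 = 5 -> a = k -> b = 6 - k)%N.
Proof. lia. Qed.
Section Infra.
Variable (D : unitRingType) (hD : division_ring D) (sigma : {rmorphism D -> D}).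
Hypothesis sinj : injective sigma.

Lemma iter_sig0 i : iter i sigma 0 = 0.
Proof. by elim: i => //= i ->; rewrite rmorph0. Qed.

Lemma skew_coef (p q : {poly D}) k : (skew_mul sigma p q)`_k = \sum_(i < k.+1) p`_i * iter i sigma q`_(k - i).
Proof.
rewrite /skew_mul coef_poly; case: ltnP => // H; symmetry; apply: big1 => i _.
case: (ltnP i (size p)) => Hi; last by rewrite nth_default // mul0r.
rewrite (nth_default _ (_ : (size q <= k - i)%N)) ?iter_sig0 ?mulr0 //.
exact: (natlem _ _ _ _ H Hi).
Qed.

Lemma mul_neq0 (x y : D) : x != 0 -> y != 0 -> x * y != 0.
Proof.
move=> hx hy; apply/eqP => E; move/eqP: hy; apply.
by rewrite -(mulKr (hD _ hx) y) E mulr0.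
Qed.

Lemma iter_neq0 i (x : D) : x != 0 -> iter i sigma x != 0.
Proof.
elim: i => //= i IH hx; apply/eqP => E.
by move/eqP: (IH hx); apply; apply: sinj; rewrite E rmorph0.
Qed.

Lemma coef_neq0_size (p : {poly D}) i : p`_i != 0 -> (i < size p)%N.
Proof. by apply: contraR; rewrite -leqNgt => H; rewrite nth_default. Qed.

Lemma skew_top (p q : {poly D}) : p != 0 -> q != 0 ->
  (skew_mul sigma p q)`_((size p).-1 + (size q).-1) = lead_coef p * iter (size p).-1 sigma (lead_coef q).
Proof.
move=> hp hq; rewrite skew_coef.
have sp : (0 < size p)%N by rewrite size_poly_gt0.
have sq : (0 < size q)%N by rewrite size_poly_gt0.
have Hm : ((size p).-1 < ((size p).-1 + (size q).-1).+1)%N by lia.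
rewrite (bigD1 (Ordinal Hm)) //= addKn big1 ?addr0 // => i /eqP Hi.
have Hi' : nat_of_ord i <> (size p).-1 by move=> E; apply: Hi; apply: val_inj.
case: (ltnP i (size p).-1) => H.
  rewrite (nth_default _ (_ : (size q <= _ - i)%N)) ?iter_sig0 ?mulr0 //; exact: natl2.
by rewrite nth_default ?mul0r //; exact: natl3.
Qed.

Lemma skew_size (p q : {poly D}) : p != 0 -> q != 0 ->
  size (skew_mul sigma p q) = (size p + size q).-1.
Proof.
move=> hp hq; apply/eqP; rewrite eqn_leq size_poly /=.
have sp : (0 < size p)%N by rewrite size_poly_gt0.
have sq : (0 < size q)%N by rewrite size_poly_gt0.
have : (skew_mul sigma p q)`_((size p).-1 + (size q).-1) != 0.
  by rewrite skew_top // mul_neq0 ?iter_neq0 // lead_coef_eq0.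
move/coef_neq0_size; exact: natl4.
Qed.

Lemma skew_mul0p (q : {poly D}) : skew_mul sigma 0 q = 0.
Proof. apply/polyP => k; rewrite skew_coef coef0 big1 // => i _; by rewrite coef0 mul0r. Qed.
Lemma skew_mulp0 (p : {poly D}) : skew_mul sigma p 0 = 0.
Proof. apply/polyP => k; rewrite skew_coef coef0 big1 // => i _; by rewrite coef0 iter_sig0 mulr0. Qed.

End Infra.

Section Infra2.
Variable (D : unitRingType) (sigma : {rmorphism D -> D}).
Lemma natl7 (a b k i : nat) : (a + b <= 6 -> 5 <= k -> i < a -> b <= k - i)%N.
Proof. lia. Qed.
Lemma natl8 (a k : nat) : (a <= 5 -> 5 <= k -> a <= k)%N.
Proof. lia. Qed.

Lemma skew_Poly_eq (l l1 l2 : seq D) : (size l <= 5)%N -> (size l1 + size l2 <= 6)%N ->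
  (forall k, (k < 5)%N -> l`_k = \sum_(i < k.+1) l1`_i * iter i sigma l2`_(k - i)) ->
  Poly l = skew_mul sigma (Poly l1) (Poly l2).
Proof.
move=> sl sl12 H; apply/polyP => k; rewrite skew_coef coef_Poly.
case: (ltnP k 5) => Hk.
  by rewrite H //; apply: eq_bigr => i _; rewrite !coef_Poly.
rewrite nth_default; last exact: natl8.
symmetry; apply: big1 => i _; rewrite !coef_Poly.
case: (ltnP i (size l1)) => Hi; last by rewrite nth_default ?mul0r.
rewrite (nth_default _ (_ : (size l2 <= k - i)%N)) ?iter_sig0 ?mulr0 //.
exact: natl7 Hi.
Qed.
End Infra2.


Section Z.
Set Implicit Arguments. Unset Strict Implicit.
Variable V : zmodType.
Implicit Types x y z w A B C P Q R S : V.
Lemma Z1 x y z : x + y + (z - y - x) = z.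
Proof. by rewrite -(addrA z) -opprD (addrC y x) (addrC (x + y)) subrK. Qed.
Lemma Z3 x y : x + y + (- x - y) = 0.
Proof. by rewrite -opprD subrr. Qed.
Lemma Z2 A B C P Q R S : A + B + C + (P + Q) + R + S = (B + A + Q + R) + (C + P) + S.
Proof.
congr (_ + S); rewrite (addrC B A) -!addrA; congr (A + (B + _)).
rewrite (addrCA C P) (addrCA C Q) (addrCA P Q); congr (Q + _).
by rewrite (addrC C R) (addrCA P R C) (addrC P C).
Qed.
Lemma Z4 x y z w : x + y + z + w - (y + z) - x = w.
Proof. by rewrite -(addrA x y z) (addrC x (y + z)) -(addrA (y + z) x w) (addrC (y + z) (x + w)) addrK (addrC x w) addrK. Qed.
Lemma Z5 x y w : x + y + w = 0 -> - x - y = w.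
Proof. by move=> H; rewrite -opprD; apply/eqP; rewrite eq_sym -addr_eq0 addrC H. Qed.
Lemma Z6 x w : x + w = 0 -> - x = w.
Proof. by move=> H; apply/eqP; rewrite eq_sym -addr_eq0 addrC H. Qed.
End Z.

Section Cases.
Set Implicit Arguments. Unset Strict Implicit.
Variable (D : unitRingType) (hD : division_ring D) (sigma : {rmorphism D -> D}).
Variable sinv : D -> D.
Hypothesis sK : cancel sigma sinv.
Hypothesis Ks : cancel sinv sigma.
Local Notation s := (sigma : D -> D).

Lemma sig_neq0 x : x != 0 -> s x != 0.
Proof. apply: contraNneq => E; apply/eqP; by rewrite -(sK x) E -(rmorph0 sigma) sK rmorph0. Qed.

Lemma caseB (a0 a1 a2 a3 g0 g1 h0 h1 h2 h3 : D) :
  a0 = g0 * h0 -> a1 = g0 * h1 + g1 * s h0 -> a2 = g0 * h2 + g1 * s h1 ->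
  a3 = g0 * h3 + g1 * s h2 -> 1 = g1 * s h3 ->
  exists b, s (s (s b)) * s (s b) * s b * b + s (s (s b)) * s (s b) * s b * a3
         + s (s (s b)) * s (s b) * s a2 + s (s (s b)) * s (s a1)
         + s (s (s a0)) = 0.
Proof.
move=> E0 E1 E2 E3 E4.
have [v sv] : exists v, s v = g1 by exists (sinv g1); rewrite Ks.
have vn0 : v != 0.
  apply/eqP => v0; move: E4; rewrite -sv v0 rmorph0 mul0r; move=> /eqP.
  by rewrite oner_eq0.
have vu := hD vn0.
have [b Hg0] : exists b, g0 = - (b * v) by exists (- (g0 * v^-1)); rewrite mulNr opprK divrK.
exists b.
have vh3 : v * h3 = 1 by apply: (can_inj sK); rewrite rmorphM rmorph1 sv E4.
have -> : s (s (s b)) * s (s b) * s b * b + s (s (s b)) * s (s b) * s b * a3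
         + s (s (s b)) * s (s b) * s a2 + s (s (s b)) * s (s a1)
         + s (s (s a0)) = s (s (s b)) * (s (s b) * (s b * (b + a3) + s a2) + s (s a1)) + s (s (s a0)).
  by rewrite !mulrDr !mulrA.
have -> : b + a3 = s (v * h2).
  by rewrite E3 Hg0 mulNr -mulrA vh3 mulr1 rmorphM sv addNKr.
have -> : s b * s (v * h2) + s a2 = s (s (v * h1)).
  rewrite -rmorphM -rmorphD; congr (s _).
  by rewrite E2 Hg0 mulNr !mulrA addNKr rmorphM sv.
have -> : s (s b) * s (s (v * h1)) + s (s a1) = s (s (s (v * h0))).
  rewrite -!rmorphM -!rmorphD; congr (s (s _)).
  by rewrite E1 Hg0 mulNr !mulrA addNKr rmorphM sv.
by rewrite -!rmorphM -!rmorphD E0 Hg0 mulNr !mulrA addrN !rmorph0.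
Qed.

Lemma iter_neq0' x : x != 0 -> s (s x) != 0 /\ s (s (s x)) != 0.
Proof. by move=> hx; split; do ! apply: sig_neq0. Qed.

Lemma caseA (a0 a1 a2 a3 g0 g1 g2 g3 h0 h1 : D) :
  a0 = g0 * h0 -> a1 = g0 * h1 + g1 * s h0 -> a2 = g1 * s h1 + g2 * s (s h0) ->
  a3 = g2 * s (s h1) + g3 * s (s (s h0)) -> 1 = g3 * s (s (s h1)) ->
  exists b, s (s (s b)) * s (s b) * s b * b + a3 * s (s b) * s b * b
         + a2 * s b * b + a1 * b + a0 = 0.
Proof.
move=> E0 E1 E2 E3 E4.
have h1n0 : h1 != 0.
  apply/eqP => h10; move: E4; rewrite h10 !rmorph0 mulr0; move=> /eqP.
  by rewrite oner_eq0.
have hu := hD h1n0.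
have [b Hh0] : exists b, h0 = - (h1 * b) by exists (- (h1^-1 * h0)); rewrite mulrN opprK mulVKr.
exists b.
have -> : s (s (s b)) * s (s b) * s b * b + a3 * s (s b) * s b * b
         + a2 * s b * b + a1 * b + a0 = (((s (s (s b)) + a3) * s (s b) + a2) * s b + a1) * b + a0.
  by rewrite !mulrDl.
have -> : s (s (s b)) + a3 = g2 * s (s h1).
  by rewrite E3 Hh0 !rmorphN !rmorphM mulrN mulrA -E4 mul1r addrCA addrN addr0.
have -> : g2 * s (s h1) * s (s b) + a2 = g1 * s h1.
  by rewrite E2 Hh0 !rmorphN !rmorphM mulrN !mulrA addrCA addrN addr0.
have -> : g1 * s h1 * s b + a1 = g0 * h1.
  by rewrite E1 Hh0 !rmorphN !rmorphM mulrN !mulrA addrCA addrN addr0.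
by rewrite E0 Hh0 mulrN mulrA addrN.
Qed.

Lemma caseC (a0 a1 a2 a3 g0 g1 g2 h0 h1 h2 : D) :
  a0 = g0 * h0 -> a1 = g0 * h1 + g1 * s h0 -> a2 = g0 * h2 + g1 * s h1 + g2 * s (s h0) ->
  a3 = g1 * s h2 + g2 * s (s h1) -> 1 = g2 * s (s h2) ->
  exists c d, (s (s c) * s c * c + s (s d) * c + s (s c) * s d
          + a3 * (s d + s c * c) + a2 * c + a1 = 0)
         /\
         (s (s d) * d + s (s c) * s c * d + a3 * s c * d + a2 * d + a0 = 0).
Proof.
move=> E0 E1 E2 E3 E4.
have h2n0 : h2 != 0.
  apply/eqP => h20; move: E4; rewrite h20 !rmorph0 mulr0; move=> /eqP.
  by rewrite oner_eq0.
have hu := hD h2n0.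
have [c Hh1] : exists c, h1 = - (h2 * c) by exists (- (h2^-1 * h1)); rewrite mulrN opprK mulVKr.
have [d Hh0] : exists d, h0 = - (h2 * d) by exists (- (h2^-1 * h0)); rewrite mulrN opprK mulVKr.
exists c, d.
have K1 : s (s c) + a3 = g1 * s h2.
  by rewrite E3 Hh1 !rmorphN !rmorphM mulrN mulrA -E4 mul1r addrCA addrN addr0.
have Ha2 : a2 = g0 * h2 - g1 * s h2 * s c - s (s d).
  by rewrite E2 Hh1 Hh0 !rmorphN !rmorphM !mulrN !mulrA -E4 mul1r.
have K0 : s (s d) + s (s c) * s c + a3 * s c + a2 = g0 * h2.
  rewrite -(addrA (s (s d))) -mulrDl K1 Ha2.
  exact: Z1.
have Ha1 : a1 = - (g0 * h2 * c) - g1 * s h2 * s d.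
  by rewrite E1 Hh1 Hh0 !rmorphN !rmorphM !mulrN !mulrA.
have Ha0 : a0 = - (g0 * h2 * d).
  by rewrite E0 Hh0 mulrN mulrA.
split.
  rewrite mulrDr Z2 !mulrA -!(mulrDl _ _ c) K0 -(mulrDl _ _ (s d)) K1 Ha1.
  exact: Z3.
by rewrite -!(mulrDl _ _ d) K0 Ha0 addrN.
Qed.
End Cases.

Theorem mainTheorem15 (D : unitRingType) (hD : division_ring D)
  (sigma : {rmorphism D -> D}) (hsigma : bijective sigma)
  (a0 a1 a2 a3 : D) :
  let s := (sigma : D -> D) in
  let f : {poly D} := Poly [:: a0; a1; a2; a3; 1] in
  skew_irreducible s f <->
  [/\ (forall b : D,
         s (s (s b)) * s (s b) * s b * b + a3 * s (s b) * s b * b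
         + a2 * s b * b + a1 * b + a0 != 0),
      (forall b : D,
         s (s (s b)) * s (s b) * s b * b + s (s (s b)) * s (s b) * s b * a3
         + s (s (s b)) * s (s b) * s a2 + s (s (s b)) * s (s a1)
         + s (s (s a0)) != 0)
    & (forall c d : D,
         (s (s c) * s c * c + s (s d) * c + s (s c) * s d
          + a3 * (s d + s c * c) + a2 * c + a1 != 0)
         \/
         (s (s d) * d + s (s c) * s c * d + a3 * s c * d + a2 * d + a0 != 0))].
Proof.
move=> s f; subst s f.
case: (hsigma) => sinv sK Ks.
have sinj : injective sigma := can_inj sK.
set f := Poly _.
have f4 : f`_4 = 1 by rewrite coef_Poly.
have sf : size f = 5%N.
  apply/eqP; rewrite eqn_leq size_Poly /=; apply: coef_neq0_size; by rewrite f4 oner_eq0.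
split.
  move=> [Hu Hfac]; split.
  + move=> b; apply/eqP => Hb; apply: Hfac.
    have [g2 Hg2] : exists g2, g2 = sigma (sigma (sigma b)) + a3 by eexists.
    have [g1 Hg1] : exists g1, g1 = g2 * sigma (sigma b) + a2 by eexists.
    have [g0 Hg0] : exists g0, g0 = g1 * sigma b + a1 by eexists.
    exists (Poly [:: g0; g1; g2; 1]), (Poly [:: -b; 1]).
    split; last by split; apply: (leq_ltn_trans (size_Poly _)); rewrite sf.
    apply: skew_Poly_eq => //.
    case=> [|[|[|[|[|k]]]]] // _; rewrite !big_ord_recr big_ord0 /= ?subSS ?subn0 ?rmorph0 ?rmorph1 ?mulr0 ?mul0r ?mulr1 ?mul1r ?addr0 ?add0r.
    * have H0 : g0 * b + a0 = 0 by rewrite Hg0 Hg1 Hg2 -Hb !mulrDl.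
      by rewrite mulrN (Z6 H0).
    * by rewrite rmorphN mulrN Hg0 (addrC (g1 * sigma b)) addrK.
    * by rewrite !rmorphN mulrN Hg1 (addrC (g2 * _)) addrK.
    * by rewrite !rmorphN Hg2 (addrC (sigma _)) addrK.
    * by [].
  + move=> b; apply/eqP => Hb; apply: Hfac.
    have [c2 Hc2] : exists c2, sigma c2 = b + a3 by exists (sinv (b + a3)); rewrite Ks.
    have [c1 Hc1] : exists c1, sigma c1 = b * c2 + a2 by exists (sinv (b * c2 + a2)); rewrite Ks.
    have [c0 Hc0] : exists c0, sigma c0 = b * c1 + a1 by exists (sinv (b * c1 + a1)); rewrite Ks.
    exists (Poly [:: -b; 1]), (Poly [:: c0; c1; c2; 1]).
    split; last by split; apply: (leq_ltn_trans (size_Poly _)); rewrite sf.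
    apply: skew_Poly_eq => //.
    case=> [|[|[|[|[|k]]]]] // _; rewrite !big_ord_recr big_ord0 /= ?subSS ?subn0 ?rmorph0 ?rmorph1 ?mulr0 ?mul0r ?mulr1 ?mul1r ?addr0 ?add0r.
    * have H : b * c0 + a0 = 0.
        do 3 apply: (sinj); rewrite !rmorph0 -Hb.
        by rewrite !rmorphD !rmorphM Hc0 !rmorphD !rmorphM Hc1 !rmorphD !rmorphM Hc2 !mulrDr !mulrA.
      by rewrite mulNr (Z6 H).
    * by rewrite Hc0 mulNr addKr.
    * by rewrite Hc1 mulNr addKr.
    * by rewrite Hc2 addKr.
    * by [].
  + move=> c d; apply/orP; rewrite -negb_and; apply/negP => /andP[/eqP Hc /eqP Hd]; apply: Hfac.
    have [G1 HG1] : exists G1, G1 = sigma (sigma c) + a3 by eexists.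
    have [G0 HG0] : exists G0, G0 = sigma (sigma d) + sigma (sigma c) * sigma c + a3 * sigma c + a2 by eexists.
    exists (Poly [:: G0; G1; 1]), (Poly [:: -d; -c; 1]).
    split; last by split; apply: (leq_ltn_trans (size_Poly _)); rewrite sf.
    apply: skew_Poly_eq => //.
    case=> [|[|[|[|[|k]]]]] // _; rewrite !big_ord_recr big_ord0 /= ?subSS ?subn0 ?rmorph0 ?rmorph1 ?mulr0 ?mul0r ?mulr1 ?mul1r ?addr0 ?add0r.
    * have H : G0 * d + a0 = 0 by rewrite HG0 -Hd !mulrDl.
      by rewrite mulrN (Z6 H).
    * have H : G0 * c + G1 * sigma d + a1 = 0.
        rewrite -Hc mulrDr Z2 !mulrA -!(mulrDl _ _ c) -(mulrDl _ _ (sigma d)) HG0 HG1 //.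
      by rewrite rmorphN !mulrN (Z5 H).
    * by rewrite !rmorphN mulrN HG0 HG1 mulrDl Z4.
    * by rewrite !rmorphN HG1 (addrC (sigma (sigma c))) addrK.
    * by [].
case=> C1 C2 C3; split.
  case=> g [Hfg _].
  have g0 : g != 0 by apply: contra_eqN Hfg => /eqP ->; rewrite skew_mulp0 eq_sym oner_eq0.
  have f0 : f != 0 by rewrite -size_poly_gt0 sf.
  move: (congr1 (fun p : {poly D} => size p) Hfg); rewrite skew_size // sf size_poly1.
  have : (0 < size g)%N by rewrite size_poly_gt0.
  lia.
case=> g [h [Hf [Hg Hh]]].
have gn0 : g != 0 by apply: contra_eqN Hf => /eqP ->; rewrite skew_mul0p -size_poly_gt0 sf.
have hn0 : h != 0 by apply: contra_eqN Hf => /eqP ->; rewrite skew_mulp0 -size_poly_gt0 sf.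
have Hs := congr1 (fun p : {poly D} => size p) Hf; rewrite skew_size // sf in Hs.
have E k := congr1 (fun p : {poly D} => p`_k) Hf.
have E0 := E 0%N; have E1 := E 1%N; have E2 := E 2%N; have E3 := E 3%N; have E4 := E 4%N.
move: E0 E1 E2 E3 E4; rewrite /= !skew_coef !big_ord_recr !big_ord0 /= !coef_Poly /= ?subSS ?subn0 ?add0r => E0 E1 E2 E3 E4.
rewrite sf in Hg Hh.
have := natl5 _ _ (esym Hs) Hg Hh.
case=> [sg|[sg|sg]].
- have sh : size h = 4%N by exact: natl6 (esym Hs) sg.
  have [z2 z3 z4] : [/\ g`_2 = 0, g`_3 = 0 & g`_4 = 0] by split; apply: nth_default; rewrite sg.
  have z4' : h`_4 = 0 by apply: nth_default; rewrite sh.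
  rewrite z2 z3 z4 z4' ?rmorph0 ?mulr0 ?mul0r ?addr0 ?add0r in E0 E1 E2 E3 E4.
  have [b Hb] := caseB hD sK Ks E0 E1 E2 E3 E4.
  by move: (C2 b); rewrite Hb eqxx.
- have sh : size h = 3%N by exact: natl6 (esym Hs) sg.
  have [z3 z4] : g`_3 = 0 /\ g`_4 = 0 by split; apply: nth_default; rewrite sg.
  have [z3' z4'] : h`_3 = 0 /\ h`_4 = 0 by split; apply: nth_default; rewrite sh.
  rewrite z3 z4 z3' z4' ?rmorph0 ?mulr0 ?mul0r ?addr0 ?add0r ?rmorph0 in E0 E1 E2 E3 E4.
  have [c [d [Hc Hd]]] := caseC hD E0 E1 E2 E3 E4.
  by case: (C3 c d); rewrite ?Hc ?Hd eqxx.
- have sh : size h = 2%N by exact: natl6 (esym Hs) sg.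
  have z4 : g`_4 = 0 by apply: nth_default; rewrite sg.
  have [z2' z3' z4'] : [/\ h`_2 = 0, h`_3 = 0 & h`_4 = 0] by split; apply: nth_default; rewrite sh.
  rewrite z4 z2' z3' z4' ?rmorph0 ?mulr0 ?mul0r ?addr0 ?add0r ?rmorph0 in E0 E1 E2 E3 E4.
  have [b Hb] := caseA hD E0 E1 E2 E3 E4.
  by move: (C1 b); rewrite Hb eqxx.
Qed.
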